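(* Let $\xi>0$, $v_2<v_1$ with either $v_2<0<v_1$ or $0<v_2<v_1$, $q\in[0,1]$, and for $\lambda>0$ let $\tilde p(x,t)$ be the (generalized) density of the position $\tilde X(t)$ of the extended telegraph process driven by GCPs with parameter $\lambda$ with Poissonian resets to the origin at rate $\xi$, with $\tilde X(0)=0$ and random initial velocity $V_0$, $P\{V_0=v_1\}=q=1-P\{V_0=v_2\}$. Then for $t>0$ and $v_2t<x<v_1t$, $$ \lim_{\lambda\to+\infty}\tilde p(x,t)=\mathbb 1_{\{v_2t<x<v_1t\}}\frac{e^{-\xi t}}{(v_1-v_2)t}+\frac{\xi}{v_1-v_2}\boldsymbol I(x,t)\Gamma^\xi(x,t), $$ where $\Gamma^\xi(x,t)=\Gamma[0,M_x\xi,t\xi]$ if $v_2<0<v_1$ and $\Gamma^\xi(x,t)=\Gamma[0,\frac x{v_1}\xi,m_{x,t}\xi]$ if $0<v_2<v_1$.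
   Context: GCP with intensity $\lambda>0$: a Poisson process whose rate is random, exponentially distributed with mean $\lambda$; increments satisfy $P\{\tilde N_\lambda(t+s)-\tilde N_\lambda(t)=k\}=\frac{1}{1+\lambda s}(\frac{\lambda s}{1+\lambda s})^k$. The process: a particle starts at the origin with initial velocity $V(0)$ ($v_1,v_2\ne0$, $v_2<v_1$), moves with velocity alternating between $v_1$ and $v_2$, the periods at velocity $v_1$ and at $v_2$ being governed by two independent GCPs of intensity $\lambda$; additionally it is instantaneously reset to the origin at the epochs of an independent Poisson process of rate $\xi$, restarting afresh with its initial velocity. Conditional on $V(0)=v_j$, the density is $\tilde p(x,t|v_j)=e^{-\xi t}p(x,t|v_j)+\xi\int_0^te^{-\xi s}p(x,s|v_j)ds$, where $p(x,t|v_j)=\frac{\delta(x-v_jt)}{1+\lambda t}+\mathbb 1_{\{v_2t<x<v_1t\}}\frac{\lambda}{(v_1-v_2)(1+\lambda t)}$; $\tilde p(x,t)=q\tilde p(x,t|v_1)+(1-q)\tilde p(x,t|v_2)$. Notation: $M_x=\max\{x/v_1,x/v_2\}$, $m_{x,t}=\min\{x/v_2,t\}$, $\Gamma(a,z_0,z_1)=\int_{z_0}^{z_1}s^{a-1}e^{-s}ds$, $\boldsymbol I(x,t)=\mathbb 1_{\{\min\{v_2t,0\}<x<v_1t\}}$. *)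

(* Defs.v *)
From HB Require Import structures.
From mathcomp Require Import all_boot all_order all_algebra.
From mathcomp Require Import all_classical all_reals all_analysis.
Set Implicit Arguments. Unset Strict Implicit. Unset Printing Implicit Defensive.
Import Order.TTheory GRing.Theory Num.Theory.
Import numFieldNormedType.Exports.
Local Open Scope classical_set_scope.
Local Open Scope ring_scope.

Section Defs.
Variable R : realType.
Local Notation mu := (@lebesgue_measure R).

(* Incomplete gamma integral Gamma(a,z0,z1) = int_{z0}^{z1} s^(a-1) e^(-s) ds,
   as an extended real (it is +oo e.g. for a = 0, z0 = 0 < z1). Here a = 0. *)
Definition Gamma0 (z0 z1 : R) : \bar R :=
  (\int[mu]_(s in `[z0, z1]) ((s ^-1) * expR (- s))%:E)%E.

(* Absolutely continuous part of p(x,s|v_j):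
   1_{v2 s < x < v1 s} * lam / ((v1 - v2) (1 + lam s)). *)
Definition p_ac (v1 v2 lam x s : R) : R :=
  if (v2 * s < x) && (x < v1 * s) then lam / ((v1 - v2) * (1 + lam * s)) else 0.

(* The integral  int_0^t g(s) delta(x - vj s) ds  of a test function against
   the Dirac mass delta(x - vj s) (vj <> 0): the Dirac delta in s is
   concentrated at s = x/vj with weight 1/|vj|. *)
Definition dirac_int (g : R -> R) (vj x t : R) : R :=
  if (0 < x / vj) && (x / vj < t) then g (x / vj) / `|vj| else 0.

(* Density (w.r.t. Lebesgue measure in x) of
   ptilde(x,t|vj) = e^{-xi t} p(x,t|vj) + xi int_0^t e^{-xi s} p(x,s|vj) ds
   at a point x of the open interval v2 t < x < v1 t, where the singular
   term e^{-xi t} delta(x - vj t)/(1 + lam t) vanishes. *)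
Definition ptilde_cond (xi v1 v2 lam vj x t : R) : \bar R :=
  ((expR (- xi * t) * p_ac v1 v2 lam x t)%:E
   + xi%:E * (\int[mu]_(s in `[0%R, t]) (expR (- xi * s) * p_ac v1 v2 lam x s)%:E)
   + (xi * dirac_int (fun s => expR (- xi * s) / (1 + lam * s)) vj x t)%:E)%E.

Definition ptilde (xi v1 v2 q lam x t : R) : \bar R :=
  (q%:E * ptilde_cond xi v1 v2 lam v1 x t
   + (1 - q)%:E * ptilde_cond xi v1 v2 lam v2 x t)%E.

Definition M_x (v1 v2 x : R) : R := Num.max (x / v1) (x / v2).
Definition m_xt (v2 x t : R) : R := Num.min (x / v2) t.
Definition I_xt (v1 v2 x t : R) : R :=
  if (Num.min (v2 * t) 0 < x) && (x < v1 * t) then 1 else 0.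

Definition Gamma_xi (xi v1 v2 x t : R) : \bar R :=
  if v2 < 0 then Gamma0 (M_x v1 v2 x * xi) (t * xi)
  else Gamma0 (x / v1 * xi) (m_xt v2 x t * xi).

Definition limit_density (xi v1 v2 x t : R) : \bar R :=
  ((if (v2 * t < x) && (x < v1 * t) then expR (- xi * t) / ((v1 - v2) * t) else 0)%:E
   + (xi / (v1 - v2))%:E * (I_xt v1 v2 x t)%:E * Gamma_xi xi v1 v2 x t)%E.

End Defs.

(* Main.v *)
Require Import Defs.
From HB Require Import structures.
From mathcomp Require Import all_boot all_order all_algebra.
From mathcomp Require Import all_classical all_reals all_analysis.
From mathcomp Require Import measurable_realfun.
From mathcomp Require Import ring lra.
Import Order.TTheory GRing.Theory Num.Theory.
Import numFieldNormedType.Exports.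
Local Open Scope classical_set_scope.
Local Open Scope ring_scope.
Section S.
Variable R : realType.
Local Notation mu := (@lebesgue_measure R).

Lemma measurable_inv : measurable_fun [set: R] (@GRing.inv R).
Proof.
have -> : [set: R] = [set x | x != 0] `|` [set 0].
  apply/seteqP; split=> y //= _; by case: (eqVneq y 0) => [->|h]; [right|left].
apply: (proj2 (measurable_funU (@GRing.inv R) (measurable_realfun.open_measurable (@open_neq R 0)) (measurable_set1 (0:R)))).
split; last exact: measurable_fun_set1.
apply: measurable_realfun.open_continuous_measurable_fun; first exact: open_neq.
by move=> y; rewrite inE => /inv_continuous.
Qed.

Lemma cov (a b xi : R) : 0 < xi -> 0 <= a ->
  (\int[mu]_(u in `[(a * xi)%R, (b * xi)%R]) ((u ^-1) * expR (- u))%:E =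
   \int[mu]_(s in `[a, b]) ((s ^-1) * expR (- xi * s))%:E)%E.
Proof.
move=> xi0 a0.
pose phi := fun s : R => s * xi.
have mphi : measurable_fun [set: measurableTypeR R] phi.
  by apply: measurable_funM => //; exact: measurable_cst.
pose k : {nonneg R} := NngNum (ltW xi0).
pose nu0 := mscale k (pushforward mu (phi : measurableTypeR R -> measurableTypeR R)).
pose nu := nu0 mphi.
have Emu : forall A, measurable A -> mu A = nu A.
  apply: lebesgue_measure_unique => _ [[c d] _ <-].
  rewrite /nu /nu0 /pushforward /=.
  change (mu `]c, d] = (xi%:E * mu (phi @^-1` `]c, d]))%E).
  have -> : phi @^-1` `]c, d] = `]c / xi, d / xi]%classic.
    by apply/seteqP; split => y /=; rewrite !in_itv /= /phi ltr_pdivrMr // ler_pdivlMr.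
  have h1 := lebesgue_measure_itv `]c, d].
  have h2 := lebesgue_measure_itv `](c / xi), (d / xi)].
  simpl in h1, h2.
  rewrite h1 h2 /= !lte_fin ltr_pM2r ?invr_gt0 //.
  case: ifPn => cd; last by rewrite mule0.
  by rewrite -!EFinD -EFinM; congr (_%:E); rewrite -mulrBl mulrCA divff ?gt_eqF // mulr1.
have mg : measurable_fun [set: measurableTypeR R] (fun u : measurableTypeR R => ((u ^-1) * expR (- u))%:E).
  apply/measurable_EFinP; apply: measurable_funM; first exact: measurable_inv.
  by apply: measurableT_comp => //; exact: measurable_funN.
have g0 : forall w : R, 0 <= w -> (0 <= ((w ^-1) * expR (- w))%:E)%E.
  move=> w w0; rewrite lee_fin; apply: mulr_ge0; [by rewrite invr_ge0|exact: expR_ge0].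
rewrite (eq_measure_integral nu); last by move=> A mA _; exact: Emu.
rewrite ge0_integral_mscale //; last 2 first.
  exact: (measurable_funTS mg).
  by move=> u /=; rewrite in_itv /= => /andP[h _]; apply: g0; apply: le_trans h; exact: mulr_ge0 (ltW xi0).
rewrite ge0_integral_pushforward //; last 2 first.
  exact: (measurable_funTS mg).
  by move=> u; rewrite inE /= in_itv /= => /andP[h _]; apply: g0; apply: le_trans h; exact: mulr_ge0 (ltW xi0).
have -> : phi @^-1` `[a * xi, b * xi] = `[a, b]%classic.
  apply/seteqP; split => y /=; rewrite !in_itv /= /phi.
    by rewrite !ler_pM2r.
  by rewrite !ler_pM2r.
have mgp : measurable_fun `[a, b] ((fun u : measurableTypeR R => ((u ^-1) * expR (- u))%:E) \o phi).
  exact: (measurable_funTS (measurableT_comp mg mphi)).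
rewrite -ge0_integralZl //; last first.
  by move=> y /=; rewrite in_itv /= => /andP[h _]; apply: g0; rewrite /phi mulr_ge0 // ?(le_trans a0 h) // ltW.
apply: eq_integral => y _ /=; rewrite /phi -EFinM; congr (_%:E).
by rewrite mulNr (mulrC xi y) invfM mulrA mulrCA mulfV ?gt_eqF // mulr1.
Qed.
Lemma inv_cvgy : (fun lam : R => lam^-1) @ +oo --> (0:R).
Proof.
apply/gtr0_cvgV0; last exact: cvg_id.
near=> lam; near: lam; exact: nbhs_pinfty_gt.
Unshelve. all: by end_near. Qed.

Lemma frac_cvgy (K s : R) : 0 < K -> 0 < s ->
  (fun lam : R => lam / (K * (1 + lam * s))) @ +oo --> (K * s)^-1.
Proof.
move=> K0 s0.
have H : (fun lam : R => (K * (lam^-1 + s))^-1) @ +oo --> (K * s)^-1.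
  apply: cvgV; first by rewrite mulf_neq0 ?gt_eqF.
  have -> : K * s = K * (0 + s) by rewrite add0r.
  apply: cvgM; first exact: cvg_cst.
  apply: cvgD; [exact: inv_cvgy | exact: cvg_cst].
apply: cvg_trans H; apply: near_eq_cvg; near=> lam.
have l0 : 0 < lam by near: lam; exact: nbhs_pinfty_gt.
have h1 : 1 + lam * s != 0 by rewrite gt_eqF // ltr_pwDl // mulr_ge0 // ltW.
have h2 : lam^-1 + s != 0 by rewrite gt_eqF // ltr_pwDr // invr_ge0 ltW.
by field; rewrite h1 !gt_eqF.
Unshelve. all: by end_near. Qed.


Lemma frac2_cvgy (s : R) : 0 < s ->
  (fun lam : R => (1 + lam * s)^-1) @ +oo --> (0:R).
Proof.
move=> s0.
have H : (fun lam : R => lam^-1 * (lam^-1 + s)^-1) @ +oo --> (0:R).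
  rewrite -(mul0r s^-1); apply: cvgM; first exact: inv_cvgy.
  apply: cvgV; first by rewrite gt_eqF.
  rewrite -[X in _ --> X]add0r.
  apply: cvgD; [exact: inv_cvgy | exact: cvg_cst].
apply: cvg_trans H; apply: near_eq_cvg; near=> lam.
have l0 : 0 < lam by near: lam; exact: nbhs_pinfty_gt.
have h1 : 1 + lam * s != 0 by rewrite gt_eqF // ltr_pwDl // mulr_ge0 // ltW.
have h2 : lam^-1 + s != 0 by rewrite gt_eqF // ltr_pwDr // invr_ge0 ltW.
by field; rewrite h1 !gt_eqF.
Unshelve. all: by end_near. Qed.


Definition hf (xi a K lam s : R) : R :=
  expR (- xi * s) * (if a < s then lam / (K * (1 + lam * s)) else 0).
Definition hl (xi a K s : R) : R :=
  expR (- xi * s) * (if a < s then (K * s)^-1 else 0).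

Lemma mct_lim (a t xi K : R) : 0 <= a -> 0 < xi -> 0 < K ->
  (fun lam : R => \int[mu]_(s in `[0%R, t]) (hf xi a K lam s)%:E)%E @ +oo -->
  (\int[mu]_(s in `[0%R, t]) (hl xi a K s)%:E)%E.
Proof.
move=> a0 xi0 K0.
have mh : forall lam, measurable_fun [set: measurableTypeR R] (fun s => (hf xi a K lam s)%:E).
  move=> lam; apply/measurable_EFinP; apply: measurable_funM.
    apply: measurableT_comp => //.
  apply: measurable_fun_ifT.
  - apply: measurable_fun_ltr; [exact: measurable_cst| exact: measurable_id].
  - apply: measurable_funM; first exact: measurable_cst.
    apply: measurableT_comp; first exact: measurable_inv.
    apply: measurable_funM; first exact: measurable_cst.
    apply: measurable_funD; first exact: measurable_cst.
    apply: measurable_funM; [exact: measurable_cst| exact: measurable_id].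
  - exact: measurable_cst.
have h0 : forall lam s, 0 <= lam -> 0 <= s -> 0 <= hf xi a K lam s.
  move=> lam s l0 s0; rewrite /hf; apply: mulr_ge0; first exact: expR_ge0.
  case: ifP => // _; apply: divr_ge0 => //; apply: mulr_ge0; first exact: ltW.
  by apply: addr_ge0 => //; exact: mulr_ge0.
have hmono : forall l1 l2 s, 0 <= l1 -> l1 <= l2 -> 0 <= s -> hf xi a K l1 s <= hf xi a K l2 s.
  move=> l1 l2 s l10 l12 s0; rewrite /hf; apply: ler_wpM2l; first exact: expR_ge0.
  case: ifP => // _.
  have D1 : 0 < K * (1 + l1 * s) by apply: mulr_gt0 => //; apply: ltr_pwDl => //; exact: mulr_ge0.
  have D2 : 0 < K * (1 + l2 * s).
    by apply: mulr_gt0 => //; apply: ltr_pwDl => //; apply: mulr_ge0 => //; exact: le_trans l12.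
  rewrite ler_pdivrMr // mulrAC ler_pdivlMr //.
  by nra.
have hcvg : forall s, 0 <= s -> (hf xi a K n%:R s) @[n --> \oo] --> hl xi a K s.
  move=> s s0; rewrite /hf /hl; case: ifP => as0; last first.
    exact: cvg_cst.
  apply: cvgM; first exact: cvg_cst.
  have sp : 0 < s by exact: le_lt_trans a0 as0.
  exact: (cvg_comp _ _ cvgr_idn (frac_cvgy _ _ K0 sp)).
pose G lam := (\int[mu]_(s in `[0%R, t]) (hf xi a K (Num.max lam 0) s)%:E)%E.
have ndG : nondecreasing_fun G.
  move=> x y xy; apply: ge0_le_integral => //.
  - by move=> s; rewrite /= in_itv /= => /andP[s0 _]; rewrite lee_fin h0 // le_max lexx orbT.
  - exact: measurable_funTS.
  - exact: measurable_funTS.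
  - move=> s; rewrite /= in_itv /= => /andP[s0 _]; rewrite lee_fin hmono //.
      by rewrite le_max lexx orbT.
    by rewrite ge_max le_max xy /= le_max lexx orbT.
have HG := nondecreasing_cvge ndG.
have Hn : (G n%:R) @[n --> \oo] --> (\int[mu]_(s in `[0%R, t]) (hl xi a K s)%:E)%E.
  have -> : (fun n : nat => G n%:R) = (fun n : nat => \int[mu]_(s in `[0%R, t]) (hf xi a K n%:R s)%:E)%E.
    by apply/funext => n; rewrite /G max_l.
  have -> : (\int[mu]_(s in `[0%R, t]) (hl xi a K s)%:E)%E =
     (\int[mu]_(s in `[0%R, t]) limn (fun n => (hf xi a K n%:R s)%:E))%E.
    apply: eq_integral => s; rewrite inE /= in_itv /= => /andP[s0 _].
    apply/esym/cvg_lim => //; apply: cvg_EFin; first exact: nearW.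
    exact: hcvg.
  apply: cvg_monotone_convergence => //.
  - by move=> n; exact: measurable_funTS.
  - by move=> n s; rewrite /= in_itv /= => /andP[s0 _]; rewrite lee_fin h0.
  - move=> s; rewrite /= in_itv /= => /andP[s0 _] m n mn; rewrite lee_fin hmono //.
    by rewrite ler_nat.
have Hn' : (G n%:R) @[n --> \oo] --> ereal_sup (range G).
  exact: (cvg_comp _ _ cvgr_idn HG).
have E := cvg_unique (@ereal_hausdorff R) Hn' Hn.
rewrite -E; apply: cvg_trans HG; apply: near_eq_cvg; near=> lam.
have l0 : 0 <= lam by near: lam; apply: nbhs_pinfty_ge; rewrite num_real.
by rewrite /G max_l.
Unshelve. all: by end_near. Qed.

Lemma in_set_itv (i : interval R) (y : R) : (y \in [set` i]) = (y \in i).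
Proof. by apply/idP/idP; rewrite in_setE. Qed.

Lemma hl_int (a t xi K : R) : 0 <= a -> 0 < xi -> 0 < K ->
  (\int[mu]_(s in `[0%R, t]) (hl xi a K s)%:E =
  (K^-1)%:E * Gamma0 (a * xi) (t * xi))%E.
Proof.
move=> a0 xi0 K0.
rewrite /Gamma0 cov //.
have mg : measurable_fun [set: measurableTypeR R] (fun s : measurableTypeR R => ((s ^-1) * expR (- xi * s))%:E).
  apply/measurable_EFinP; apply: measurable_funM; first exact: measurable_inv.
  by apply: measurableT_comp.
rewrite -integral_itv_obnd_cbnd; last exact: (measurable_funTS mg).
rewrite -ge0_integralZl //; last 3 first.
  exact: measurable_funTS.
  move=> s; rewrite /= in_itv /= => /andP[as0 _]; rewrite lee_fin; apply: mulr_ge0; last exact: expR_ge0.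
  by rewrite invr_ge0; apply: ltW; exact: le_lt_trans a0 as0.
  by rewrite lee_fin invr_ge0 ltW.
rewrite [LHS]integral_mkcond [RHS]integral_mkcond.
apply: eq_integral => s _; rewrite !patchE !in_set_itv !in_itv /= /hl.
case: (ltP a s) => as0.
  rewrite (ltW (le_lt_trans a0 as0)) /=; case: ifP => // _.
  by rewrite -EFinM invfM; congr (_%:E); rewrite mulrC -mulrA.
by rewrite mulr0; case: ifP => // _.
Qed.

Lemma ealg (q A C1 C2 : R) (B : \bar R) : 0 <= q -> q <= 1 -> (0 <= B)%E ->
  (q%:E * (A%:E + B + C1%:E) + (1 - q)%:E * (A%:E + B + C2%:E) =
   (A + q * C1 + (1 - q) * C2)%:E + B)%E.
Proof.
move=> q0 q1; case: B => [r||//] B0.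
  by rewrite -!EFinD; congr (_%:E); ring.
rewrite (@addey R (A%:E)) // (@addye R (C1%:E)) // (@addye R (C2%:E)) // (@addey R ((A + q * C1 + (1 - q) * C2)%:E)) //.
have [->|qp] := eqVneq q 0.
  by rewrite mul0e add0e subr0 mul1e.
rewrite gt0_muley; last by rewrite lte_fin lt_neqAle eq_sym qp q0.
rewrite addye //.
have : (0 <= (1 - q)%:E * +oo)%E by apply: mule_ge0; rewrite ?lee_fin ?subr_ge0.
by case: ((1 - q)%:E * +oo)%E.
Qed.
End S.
Arguments measurable_inv {R}.
Arguments cov {R}.
Arguments inv_cvgy {R}.
Arguments frac_cvgy {R}.
Arguments frac2_cvgy {R}.
Arguments hf {R}.
Arguments hl {R}.
Arguments mct_lim {R}.
Arguments in_set_itv {R}.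
Arguments hl_int {R}.
Arguments ealg {R}.

Theorem corollary4 (R : realType) (xi v1 v2 q t x : R) :
  0 < xi -> v2 < v1 -> ((v2 < 0 < v1) \/ (0 < v2 < v1)) ->
  0 <= q <= 1 -> 0 < t -> v2 * t < x < v1 * t ->
  ptilde xi v1 v2 q lam x t @[lam --> +oo] --> limit_density xi v1 v2 x t.
Proof.
move=> xi0 v12 hcase /andP[q0 q1] t0 /andP[xv2 xv1].
have v1p : 0 < v1.
  by case: hcase => /andP[h1 h2] //; exact: lt_trans h2.
have v2nz : v2 != 0.
  by case: hcase => /andP[h1 h2]; [rewrite lt_eqF | rewrite gt_eqF].
set K := v1 - v2.
have K0 : 0 < K by rewrite subr_gt0.
pose a := if v2 < 0 then M_x v1 v2 x else x / v1.
have a0 : 0 <= a.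
  rewrite /a; case: ifP => v2n.
    rewrite /M_x le_max; case: (leP 0 x) => x0.
      by rewrite divr_ge0 // ltW.
    by rewrite orbC ler_ndivlMr // mul0r ltW.
  have v2p : 0 < v2 by rewrite lt_neqAle eq_sym v2nz leNgt v2n.
  rewrite divr_ge0 // ?ltW //.
  by apply: (le_lt_trans _ xv2); rewrite mulr_ge0 // ltW.
have hA : forall s, 0 <= s -> s <= t -> ((v2 * s < x) && (x < v1 * s)) = (a < s).
  move=> s s0 st; rewrite /a; case: ifP => v2n.
    rewrite /M_x gt_max ltr_pdivrMr // ltr_ndivrMr // andbC.
    by rewrite (mulrC s v1) (mulrC s v2).
  have v2p : 0 < v2 by rewrite lt_neqAle eq_sym v2nz leNgt v2n.
  have -> : v2 * s < x.
    by apply: (le_lt_trans _ xv2); rewrite ler_wpM2l // ltW.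
  by rewrite /= ltr_pdivrMr // mulrC.
have hG : Gamma_xi xi v1 v2 x t = Gamma0 (a * xi) (t * xi).
  rewrite /Gamma_xi /a; case: ifP => v2n //.
  have v2p : 0 < v2 by rewrite lt_neqAle eq_sym v2nz leNgt v2n.
  rewrite /m_xt min_r //.
  by rewrite ler_pdivlMr // mulrC ltW.
have hI : I_xt v1 v2 x t = 1.
  by rewrite /I_xt gt_min xv2 xv1.
have hcond : (v2 * t < x) && (x < v1 * t) by rewrite xv2 xv1.
rewrite /limit_density -/K hI hG; case: ifPn => [_|/negP []]; last exact: hcond.
have -> : ((xi / K)%:E * 1%:E * Gamma0 (a * xi) (t * xi) =
    xi%:E * ((K^-1)%:E * Gamma0 (a * xi) (t * xi)))%E.
  by rewrite mule1 muleA -EFinM.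
pose D vj lam := xi * dirac_int (fun s => expR (- xi * s) / (1 + lam * s)) vj x t.
pose T lam := expR (- xi * t) * (lam / (K * (1 + lam * t))) + q * D v1 lam + (1 - q) * D v2 lam.
pose Il lam := (\int[lebesgue_measure]_(s in `[0%R, t]) (hf xi a K lam s)%:E)%E.
have Heq : \forall lam \near +oo,
    ((T lam)%:E + xi%:E * Il lam)%E = ptilde xi v1 v2 q lam x t.
  near=> lam.
  have l0 : 0 < lam by near: lam; exact: nbhs_pinfty_gt.
  rewrite /ptilde /ptilde_cond.
  have -> : (\int[lebesgue_measure]_(s in `[0%R, t]) (expR (- xi * s) * p_ac v1 v2 lam x s)%:E)%E = Il lam.
    apply: eq_integral => s; rewrite in_set_itv in_itv /= => /andP[s0 st].
    by rewrite /hf /p_ac hA.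
  rewrite /p_ac hcond.
  apply/esym; apply: ealg => //.
  apply: mule_ge0; first by rewrite lee_fin ltW.
  apply: integral_ge0 => s; rewrite /= in_itv /= => /andP[s0 _].
  rewrite lee_fin /hf; apply: mulr_ge0; first exact: expR_ge0.
  case: ifP => // _; apply: divr_ge0; first exact: ltW.
  by apply: mulr_ge0; [exact: ltW | apply: addr_ge0 => //; apply: mulr_ge0 => //; exact: ltW].
apply: cvg_trans (near_eq_cvg Heq) _.
have hD : forall vj, D vj lam @[lam --> +oo] --> (0:R).
  move=> vj; rewrite /D /dirac_int; have [hc|hc] := boolP ((0 < x / vj) && (x / vj < t)); last first.
    by rewrite mulr0; exact: cvg_cst.
  case/andP: hc => h1 h2.
  have H := cvgM (cvg_cst xi) (cvgM (cvgM (cvg_cst (expR (- xi * (x / vj)))) (frac2_cvgy _ h1)) (cvg_cst `|vj|^-1)).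
  rewrite mulr0 mul0r mulr0 in H.
  exact: H.
have H1 : (expR (- xi * t) * (lam / (K * (1 + lam * t)))) @[lam --> +oo] --> expR (- xi * t) * (K * t)^-1.
  by apply: cvgM; [exact: cvg_cst | exact: frac_cvgy].
have HT := cvgD (cvgD H1 (cvgM (cvg_cst q) (hD v1))) (cvgM (cvg_cst (1 - q)) (hD v2)).
rewrite !mulr0 !addr0 in HT.
have HI : Il lam @[lam --> +oo] --> ((K^-1)%:E * Gamma0 (a * xi) (t * xi))%E.
  rewrite -hl_int //; exact: mct_lim.
apply: cvgeD.
- exact: fin_num_adde_defr.
- apply: cvg_EFin; first exact: nearW.
  exact: HT.
- by apply: cvgeZl.
Unshelve. all: by end_near. Qed.
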